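(* Let $(U,\mathcal{I})$ be a downward-closed set system (with $U$ finite) that is not a matroid. Then there exist a set $V\subseteq U$ and an element $x\in V$ such that the revenue of the VCG mechanism on bid profile $\mathbb{1}[V\setminus\{x\}]$ exceeds the revenue of the VCG mechanism on bid profile $\mathbb{1}[V]$.
   Context: Bidders are the elements of $U$, and $\mathcal{I}$ is the feasibility constraint (sets of bidders that may simultaneously win). A set system with $\emptyset\in\mathcal{I}$ is downward-closed if subsets of members are members, and a matroid if moreover whenever $A,B\in\mathcal{I}$ with $|A|>|B|$ there is $x\in A\setminus B$ with $B\cup\{x\}\in\mathcal{I}$. For $S\subseteq U$, $\mathbb{1}[S]$ denotes the bid profile in which each bidder in $S$ bids $1$ and each bidder in $U\setminus S$ bids $0$. The (single-parameter) VCG mechanism selects as winners a feasible set maximizing the total bid (with ties broken arbitrarily), and charges each winner its critical bid, i.e. the infimum of bids at which it would still belong to a maximum-total-bid feasible set with the other bids fixed (equivalently its VCG externality); losers pay $0$. Revenue is the sum of payments. *)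

(* Defs.v *)
From mathcomp Require Import all_boot.
Set Implicit Arguments. Unset Strict Implicit. Unset Printing Implicit Defensive.

Section VCG.
Variable U : finType.

Definition downward_closed (I : {set {set U}}) : Prop :=
  set0 \in I /\ forall A B : {set U}, A \in I -> B \subset A -> B \in I.

Definition is_matroid (I : {set {set U}}) : Prop :=
  downward_closed I /\
  forall A B : {set U}, A \in I -> B \in I -> #|B| < #|A| ->
    exists2 x, x \in A :\: B & x |: B \in I.

Definition ind_profile (S : {set U}) : U -> nat := fun u => nat_of_bool (u \in S).

Definition welfare (b : U -> nat) (A : {set U}) : nat := \sum_(u in A) b u.

(* W is a possible VCG winner set: a feasible set of maximum total bid
   (ties broken arbitrarily). *)
Definition vcg_winners (I : {set {set U}}) (b : U -> nat) (W : {set U}) : Prop :=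
  W \in I /\ forall A, A \in I -> welfare b A <= welfare b W.

Definition opt_without (I : {set {set U}}) (b : U -> nat) (i : U) : nat :=
  \max_(A in I | i \notin A) welfare b A.

Definition vcg_payment (I : {set {set U}}) (b : U -> nat) (W : {set U}) (i : U) : nat :=
  opt_without I b i - (welfare b W - b i).

Definition vcg_revenue (I : {set {set U}}) (b : U -> nat) (W : {set U}) : nat :=
  \sum_(i in W) vcg_payment I b W i.

End VCG.

(* Main.v *)
Require Import Defs.
From mathcomp Require Import all_boot.
From mathcomp Require Import zify.
From Stdlib Require Import Classical.
Set Implicit Arguments. Unset Strict Implicit. Unset Printing Implicit Defensive.

Lemma welfare_ind (U : finType) (S T : {set U}) : welfare (ind_profile S) T = #|T :&: S|.
Proof.
rewrite /welfare /ind_profile -sum1_card.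
rewrite (eq_bigr (fun u => if u \in S then 1 else 0)); last by move=> u _; case: (u \in S).
rewrite -big_mkcondr /=; apply: eq_bigl => u; by rewrite inE.
Qed.

Section M.
Variable U : finType.
Variable I : {set {set U}}.

Definition bad (S : {set U}) := exists T T', [/\ T \in I, T' \in I, T \subset S, T' \subset S & #|T| < #|T'|] /\
  (forall y, y \in S -> y \notin T -> y |: T \notin I).

Lemma min_bad_n n (S : {set U}) : #|S| < n -> bad S -> exists V, bad V /\ forall S' : {set U}, S' \proper V -> ~ bad S'.
Proof.
elim: n S => [//|n IH] S hS hb.
case: (classic (exists S' : {set U}, S' \proper S /\ bad S')) => [[S' [hp hb']]|hn].
  apply: (IH S') => //; have := proper_card hp; lia.
exists S; split => // S' hp hb'; apply: hn; by exists S'.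
Qed.

Lemma card_minus1 (T V : {set U}) x : #|T :&: V| <= #|T :&: (V :\ x)| + 1.
Proof.
have h : T :&: V \subset x |: (T :&: (V :\ x)).
  apply/subsetP => u; rewrite !inE; case: (u == x) => //= /andP[-> ->].
by have := subset_leq_card h; rewrite cardsU1; case: (x \notin _) => /=; lia.
Qed.

End M.

Lemma L1 (o m : nat) (b : bool) : o <= m.-1 -> o - (m - b) <= 0.
Proof. case: b => /=; lia. Qed.
Lemma L2 (o m : nat) (b : bool) : o <= m -> b <= m -> o - (m - b) <= b.
Proof. case: b => /=; lia. Qed.
Lemma L3 (o r : nat) : 0 < r -> r <= o -> 1 <= o - (r - 1).
Proof. lia. Qed.

Theorem mainTheorem8 (U : finType) (I : {set {set U}}) :
  downward_closed I -> ~ is_matroid I ->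
  exists (V : {set U}) (x : U), x \in V /\
    forall W1 W2 : {set U},
      vcg_winners I (ind_profile (V :\ x)) W1 ->
      vcg_winners I (ind_profile V) W2 ->
      vcg_revenue I (ind_profile V) W2 < vcg_revenue I (ind_profile (V :\ x)) W1.
Proof.
move=> dc nm; have [dc0 dcS] := dc.
have [S0 hb0] : exists S, bad I S.
  apply: NNPP => nb; apply: nm; split => // A B hA hB hl.
  apply: NNPP => ne; apply: nb; exists (A :|: B), B, A; split; first split => //.
  - by rewrite subsetUr.
  - by rewrite subsetUl.
  - move=> y; rewrite in_setU => hy hyB; apply/negP => h; apply: ne; exists y => //.
    by rewrite in_setD hyB /=; case/orP: hy => // h'; rewrite h' in hyB.
have [V [[B [A0 [[hB hA0 hBV hA0V hlt] hmax]]] hmin]] := min_bad_n (ltnSn #|S0|) hb0.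
have hVB : 2 <= #|V :\: B|.
  rewrite leqNgt; apply/negP => h1.
  have hc := cardsID B A0.
  have hsub : #|A0 :\: B| <= #|V :\: B| by apply: subset_leq_card; apply: setSD.
  have hBA : B \subset A0.
    have /eqP <- : A0 :&: B == B by rewrite eqEcard subsetIr /=; lia.
    exact: subsetIl.
  have hAB := subset_leq_card (subsetIr A0 B).
  have [v] : exists v, v \in A0 :\: B by apply/set0Pn; rewrite -card_gt0; lia.
  rewrite in_setD => /andP[hvB hvA].
  have : v |: B \in I by apply: (dcS A0) => //; rewrite subUset sub1set hvA hBA.
  by rewrite (negbTE (hmax v (subsetP hA0V _ hvA) hvB)).
have [x] : exists x, x \in V :\: B by apply/set0Pn; rewrite -card_gt0; lia.
rewrite in_setD => /andP[hxB hxV].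
exists V, x; split => // W1 W2 [hW1 opt1] [hW2 opt2].
set Vx := V :\ x.
set m := #|W2 :&: V|.
set rho := #|W1 :&: Vx|.
have opt1' : forall A, A \in I -> #|A :&: Vx| <= rho.
  by move=> A hA; have := opt1 A hA; rewrite !welfare_ind.
have opt2' : forall A, A \in I -> #|A :&: V| <= m.
  by move=> A hA; have := opt2 A hA; rewrite !welfare_ind.
set C := [set i | [forall T : {set U}, ((T \in I) && (m <= #|T :&: V|)) ==> (i \in T)]].
have hW2V : W2 :&: V \in I by apply: (dcS W2) => //; apply: subsetIl.
have hCsub : C \subset W2 :&: V.
  apply/subsetP => i; rewrite inE => /forallP /(_ (W2 :&: V)) /implyP; apply.
  by rewrite hW2V -setIA setIid leqnn.
have hCm : #|C| <= m := subset_leq_card hCsub.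
have hA0m : #|A0| <= m by have := opt2' A0 hA0; rewrite (setIidPl hA0V).
have hF1 : V :\: B \subset C.
  apply/subsetP => v; rewrite in_setD => /andP[hvB hvV]; rewrite inE.
  apply/forallP => T; apply/implyP => /andP[hT hmT].
  apply/negPn/negP => hvT; apply: (hmin ((T :&: V) :|: B)).
  - rewrite properE; apply/andP; split; first by rewrite subUset subsetIr hBV.
    apply/subsetPn; exists v => //; by rewrite in_setU in_setI (negbTE hvT) (negbTE hvB).
  - exists B, (T :&: V); split; first split => //.
    + by apply: (dcS T) => //; apply: subsetIl.
    + by rewrite subsetUr.
    + by rewrite subsetUl.
    + exact: (leq_trans hlt (leq_trans hA0m hmT)).
    + move=> y hy hyB; apply: hmax => //; move: hy; rewrite in_setU in_setI.
      by case/orP => [/andP[_ ->]|h] //; rewrite h in hyB.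
have hC2 : #|B :&: C| + 2 <= #|C|.
  have d : (V :\: B) :&: (B :&: C) = set0.
    by apply/setP => u; rewrite !in_setI in_setD in_set0; case: (u \in B); rewrite ?andbF.
  have := cardsU (V :\: B) (B :&: C); rewrite d cards0 subn0.
  have : #|(V :\: B) :|: (B :&: C)| <= #|C|.
    by apply: subset_leq_card; rewrite subUset hF1 subsetIr.
  move=> a b; clear -a b hVB; lia.
have hrho : m <= rho + 1.
  have a := opt1' W2 hW2; have b := card_minus1 W2 V x; rewrite -/Vx -/m in b.
  clear -a b; lia.
have hBVx : B \subset Vx.
  apply/subsetP => u hu; rewrite in_setD1 (subsetP hBV _ hu) andbT.
  by apply/eqP => e; rewrite -e hu in hxB.
have hBrho : rho <= #|B|.
  rewrite leqNgt; apply/negP => hl; apply: (hmin Vx); first exact: properD1.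
  exists B, (W1 :&: Vx); split; first split => //.
  - by apply: (dcS W1) => //; apply: subsetIl.
  - exact: subsetIr.
  - by move=> y; rewrite in_setD1 => /andP[_ hy]; apply: hmax.
have hrev2 : vcg_revenue I (ind_profile V) W2 <= #|W2 :&: (V :\: C)|.
  rewrite /vcg_revenue -welfare_ind /welfare; apply: leq_sum => i hi.
  rewrite /vcg_payment welfare_ind -/m {2 3}/ind_profile.
  have hopt : opt_without I (ind_profile V) i <= m.
    rewrite /opt_without; apply/bigmax_leqP => T /andP[hT _]; rewrite welfare_ind.
    exact: opt2'.
  have hbm : nat_of_bool (i \in V) <= m.
    case: (boolP (i \in V)) => hiV //=; rewrite card_gt0; apply/set0Pn.
    by exists i; rewrite in_setI hi hiV.
  rewrite in_setD; case: (boolP (i \in C)) => hiC /=.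
  - have : opt_without I (ind_profile V) i <= m.-1.
      rewrite /opt_without; apply/bigmax_leqP => T /andP[hT hiT]; rewrite welfare_ind.
      move: hiC; rewrite inE => /forallP /(_ T); rewrite hT /= => h.
      have := opt2' T hT; case: (leqP m #|T :&: V|) => hm.
        by rewrite (implyP h hm) in hiT.
      move=> _; clear -hm; lia.
    move=> ho; apply: L1 ho.
  - exact: L2.
have hrev1 : #|W1 :&: (Vx :\: (B :&: C))| <= vcg_revenue I (ind_profile Vx) W1.
  rewrite /vcg_revenue -welfare_ind /welfare; apply: leq_sum => i hi.
  rewrite {1}/ind_profile; case: (boolP (i \in Vx :\: (B :&: C))) => //= hi'.
  move: hi'; rewrite in_setD in_setI negb_and => /andP[hnBC hiVx].
  have [T hT /andP[hiT hrT]] : exists2 T, T \in I & (i \notin T) && (rho <= #|T :&: Vx|).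
    case/orP: hnBC => [hiB | hiC].
      by exists B => //; rewrite hiB /= (setIidPl hBVx).
    move: hiC; rewrite inE negb_forall => /existsP [T]; rewrite negb_imply.
    move=> /andP[/andP[hT hmT] hiT]; exists T => //; rewrite hiT /=.
    have b := card_minus1 T V x; rewrite -/Vx in b.
    clear -b hmT hBrho hlt hA0m; lia.
  have : rho <= opt_without I (ind_profile Vx) i.
    rewrite /opt_without; apply: (leq_trans hrT); rewrite -welfare_ind.
    have hP : (T \in I) && (i \notin T) by rewrite hT hiT.
    by rewrite (bigD1 T) //= leq_maxl.
  have : 0 < rho by rewrite card_gt0; apply/set0Pn; exists i; rewrite in_setI hi hiVx.
  rewrite /vcg_payment welfare_ind -/rho /ind_profile hiVx /=; exact: L3.
have e2 : #|W2 :&: (V :\: C)| + #|C| <= m.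
  have d : (W2 :&: (V :\: C)) :&: C = set0.
    by apply/setP => u; rewrite !in_setI in_setD in_set0; case: (u \in C); rewrite ?andbF.
  have := cardsU (W2 :&: (V :\: C)) C; rewrite d cards0 subn0 => <-.
  apply: subset_leq_card; rewrite subUset hCsub andbT; apply/subsetP => u.
  by rewrite !in_setI in_setD => /andP[-> /andP[_ ->]].
have e1 : rho <= #|W1 :&: (Vx :\: (B :&: C))| + #|B :&: C|.
  apply: leq_trans (leq_card_setU _ _); apply: subset_leq_card; apply/subsetP => u.
  rewrite in_setU !in_setI in_setD !in_setI.
  by case: (u \in W1); case: (u \in Vx); case: (u \in B); case: (u \in C).
clear -hrev1 hrev2 e1 e2 hC2 hCm hrho; lia.
Qed.
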